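(* For all $f,g\in\mathrm{Mult}[[B]]$, $$f\boxtimes g=g\circ(f\boxtimes_1 g),\qquad g\,\underline{\boxtimes}\,f=f\circ\big((f\boxtimes_2 g)\cdot I\big).$$
   Context: $B$ is a unital algebra over a field $\mathbb K$ of characteristic zero. $\mathrm{Mult}[[B]]$: sequences $f=(f_n)_{n\ge0}$ of multilinear maps $f_n:B^n\to B$. Product $(f\cdot g)_n(x_1,\dots,x_n)=\sum_{k=0}^n f_k(x_1,\dots,x_k)g_{n-k}(x_{k+1},\dots,x_n)$; for $g_0=0$, composition $(f\circ g)_n(x_1,\dots,x_n)=\sum_{l\ge0}\sum_{k_1+\dots+k_l=n,k_i\ge1}f_l(g_{k_1}(x_1,\dots,x_{k_1}),\dots,g_{k_l}(x_{n-k_l+1},\dots,x_n))$; $I=(\delta_{n,1}\mathrm{id}_B)$. Planar binary trees: $Y_0=\{|\}$, $Y_n=\{\sigma\vee\tau:\sigma\in Y_k,\tau\in Y_l,k+l=n-1\}$ ($\sigma\vee\tau$: root with left subtree $\sigma$, right subtree $\tau$); each $\tau\in Y_n$, $n\ge1$, is uniquely $\tau_1\vee(\tau_2\vee(\cdots\vee(\tau_k\vee|)))$; $j_i=|\tau_1|+\dots+|\tau_i|+i$. For $f,g\in\mathrm{Mult}[[B]]$: $(f\cup g)_|=1$, $(f\cup g)_\tau(x_1,\dots,x_n)=g_k((g\cup f)_{\tau_1}(x_1,\dots,x_{j_1-1})x_{j_1},\dots,(g\cup f)_{\tau_k}(x_{j_{k-1}+1},\dots,x_{j_k-1})x_{j_k})$.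 $R:Y\to Y$: $R(|)=|$, $R(\sigma\vee\tau)=(|\vee R(\sigma))\vee R(\tau)$. Boxed convolutions (for $n\ge1$): $(f\boxtimes g)_n(x_1,\dots,x_n)=\sum_{\tau\in Y_n}(f\cup g)_{R(\tau)}(x_1,1,x_2,1,\dots,x_n,1)$, $(f\boxtimes g)_0=g_0$; $(f\underline\boxtimes g)_n(x_1,\dots,x_n)=\sum_{\tau\in Y_n}(f\cup g)_{R(\tau)}(1,x_1,1,x_2,\dots,1,x_n)$, $(f\underline\boxtimes g)_0=g_0$; $(f\boxtimes_1 g)_n(x_1,\dots,x_n)=\sum_{\tau\in Y_{n-1}}(g\cup f)_{|\vee R(\tau)}(x_1,1,x_2,1,\dots,1,x_n)$, $(f\boxtimes_1 g)_0=0$; $(f\boxtimes_2 g)_n(x_1,\dots,x_n)=\sum_{\tau\in Y_n}(f\cup g)_{|\vee R(\tau)}(1,x_1,1,x_2,\dots,1,x_n,1)$, $(f\boxtimes_2 g)_0=g_1(1)$. *)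

(* Defs.v *)
From HB Require Import structures.
From mathcomp Require Import all_boot all_order all_algebra.
Set Implicit Arguments. Unset Strict Implicit. Unset Printing Implicit Defensive.
Import Order.TTheory GRing.Theory Num.Theory.
Local Open Scope ring_scope.

(* An element f of Mult[[B]] is represented as a function f : seq B -> B;
   its component f_n is the restriction of f to lists of length n,
   i.e. f_n(x_1,...,x_n) = f [:: x_1; ...; x_n]. *)

Section Mult.
Variables (K : fieldType) (B : algType K).

Definition multilinear (f : seq B -> B) : Prop :=
  forall (s1 s2 : seq B) (a : K) (x y : B),
    f (s1 ++ (a *: x + y) :: s2) = a *: f (s1 ++ x :: s2) + f (s1 ++ y :: s2).

Definition mprod (f g : seq B -> B) : seq B -> B :=
  fun xs => \sum_(k < (size xs).+1) f (take k xs) * g (drop k xs).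

Definition mI : seq B -> B := fun xs => if xs is [:: x] then x else 0.

End Mult.

(* compositions of n: all sequences (k_1,...,k_l) of positive integers with
   sum n, each listed exactly once.  comps 0 = [:: [::]] (l = 0). *)
Fixpoint comps (n : nat) : seq (seq nat) :=
  match n with
  | 0 => [:: [::]]
  | n'.+1 =>
    match n' with
    | 0 => [:: [:: 1]]
    | _ => flatten [seq (match c with
                        | k :: c' => [:: 1 :: k :: c'; k.+1 :: c']
                        | [::] => [::] end) | c <- comps n']
    end
  end.

Section Comp.
Variables (K : fieldType) (B : algType K).
Definition mcomp (f g : seq B -> B) : seq B -> B :=
  fun xs => \sum_(c <- comps (size xs)) f (map g (reshape c xs)).
End Comp.

Inductive tree := Leaf | Node of tree & tree.

Fixpoint tsize (t : tree) : nat :=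
  match t with Leaf => 0 | Node l r => (tsize l + tsize r).+1 end.

Fixpoint trees_ht (h : nat) : seq tree :=
  match h with
  | 0 => [:: Leaf]
  | h'.+1 => Leaf :: [seq Node a b | a <- trees_ht h', b <- trees_ht h']
  end.

Definition Y (n : nat) : seq tree := [seq t <- trees_ht n | tsize t == n].

Fixpoint Rt (t : tree) : tree :=
  match t with Leaf => Leaf | Node s t' => Node (Node Leaf (Rt s)) (Rt t') end.

Section Cup.
Variables (K : fieldType) (B : algType K).

(* (f cup g)_| = 1;
   (f cup g)_tau(x) = g_k((g cup f)_{tau_1}(..) x_{j_1}, ..., (g cup f)_{tau_k}(..) x_{j_k})
   where tau = tau_1 \/ (tau_2 \/ ( ... \/ (tau_k \/ |))).
   The inner [spine] walks down the right comb computing the k arguments. *)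
Fixpoint cup (f g : seq B -> B) (t : tree) (xs : seq B) {struct t} : B :=
  match t with
  | Leaf => 1
  | Node l r =>
      g ((cup g f l (take (tsize l) xs) * nth 0 xs (tsize l))
         :: (fix spine (r : tree) (ys : seq B) {struct r} : seq B :=
               match r with
               | Leaf => [::]
               | Node l' r' =>
                   (cup g f l' (take (tsize l') ys) * nth 0 ys (tsize l'))
                     :: spine r' (drop (tsize l').+1 ys)
               end) r (drop (tsize l).+1 xs))
  end.

Definition ilv1 (xs : seq B) : seq B := flatten [seq [:: x; 1] | x <- xs].
Definition ilv2 (xs : seq B) : seq B := flatten [seq [:: 1; x] | x <- xs].

Definition boxt (f g : seq B -> B) : seq B -> B := fun xs =>
  if xs is [::] then g [::]
  else \sum_(t <- Y (size xs)) cup f g (Rt t) (ilv1 xs).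

Definition uboxt (f g : seq B -> B) : seq B -> B := fun xs =>
  if xs is [::] then g [::]
  else \sum_(t <- Y (size xs)) cup f g (Rt t) (ilv2 xs).

Definition box1 (f g : seq B -> B) : seq B -> B := fun xs =>
  if xs is [::] then 0
  else \sum_(t <- Y (size xs).-1) cup g f (Node Leaf (Rt t)) (behead (ilv2 xs)).

Definition box2 (f g : seq B -> B) : seq B -> B := fun xs =>
  if xs is [::] then g [:: 1]
  else \sum_(t <- Y (size xs)) cup f g (Node Leaf (Rt t)) (rcons (ilv2 xs) 1).

End Cup.

(* Main.v *)
Require Import Defs.
From HB Require Import structures.
From mathcomp Require Import all_boot all_order all_algebra zify.
Import Order.TTheory GRing.Theory Num.Theory.
Local Open Scope ring_scope.
Local Notation tsize := Defs.tsize.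

Definition Shs {V : nmodType} (T : seq tree) (n : nat) (Phi : tree -> V) : V :=
  \sum_(t <- T | tsize t == n) Phi t.

Lemma big_nodes (V : nmodType) (s s' : seq tree) (P : pred tree) (F : tree -> V) :
  \sum_(t <- [seq Node a b | a <- s, b <- s'] | P t) F t =
  \sum_(a <- s) \sum_(b <- s' | P (Node a b)) F (Node a b).
Proof.
rewrite big_mkcond big_allpairs_dep; apply: eq_bigr => a _.
by rewrite [RHS]big_mkcond.
Qed.

Lemma Sh0 (V : nmodType) h (Phi : tree -> V) : Shs (trees_ht h) 0 Phi = Phi Leaf.
Proof.
case: h => [|h]; rewrite /Shs /= big_cons /=.
  by rewrite big_nil addr0.
rewrite big_nodes big1 ?addr0 // => a _.
by rewrite big_pred0.
Qed.

Lemma trees_decomp (V : nmodType) h m (Phi : tree -> V) :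
  Shs (trees_ht h.+1) m.+1 Phi =
  \sum_(a <- trees_ht h) \sum_(b <- trees_ht h | (tsize a + tsize b)%N == m) Phi (Node a b).
Proof. by rewrite /Shs /= big_cons /= big_nodes. Qed.

Lemma group (V : nmodType) (T : seq tree) m (Psi : tree -> tree -> V) :
  \sum_(a <- T) \sum_(b <- T | (tsize a + tsize b)%N == m) Psi a b =
  \sum_(i < m.+1) Shs T i (fun a => Shs T (m - i)%N (fun b => Psi a b)).
Proof.
rewrite /Shs.
under [RHS]eq_bigr => i _ do rewrite big_mkcond.
rewrite [RHS]exchange_big; apply: eq_bigr => a _.
case: (ltnP (tsize a) m.+1) => H.
  rewrite (bigD1 (Ordinal H)) //= eqxx [X in _ + X]big1 ?addr0.
    apply: eq_bigl => b; apply/eqP/eqP; lia.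
  move=> i ne; case: eqP => // E; move: ne.
  by rewrite (_ : i = Ordinal H) ?eqxx //; apply: val_inj.
rewrite big_mkcond big1 => [|b _]; last by case: eqP => //; lia.
by rewrite big1 // => i _; case: eqP => // E; have := ltn_ord i; lia.
Qed.

Lemma stab (V : nmodType) : forall h n (Phi : tree -> V), (n <= h)%N ->
  Shs (trees_ht h.+1) n Phi = Shs (trees_ht h) n Phi.
Proof.
elim => [|h IH] [|m] Phi Hle; [by rewrite !Sh0 | by [] | by rewrite !Sh0 | ].
rewrite !trees_decomp !group; apply: eq_bigr => i _.
have Hi := ltn_ord i.
rewrite IH; last by lia.
apply: eq_bigr => a _; apply: IH; lia.
Qed.

Lemma stab2 (V : nmodType) k j (Phi : tree -> V) : (j <= k)%N ->
  Shs (trees_ht k) j Phi = Shs (trees_ht j) j Phi.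
Proof.
move=> /subnKC <-; elim: (k - j)%N => [|d IH]; first by rewrite addn0.
by rewrite addnS stab ?IH // leq_addr.
Qed.

Lemma YE (V : nmodType) i (Phi : tree -> V) :
  \sum_(a <- Y i) Phi a = Shs (trees_ht i) i Phi.
Proof. by rewrite /Y big_filter. Qed.

Lemma Y_decomp (V : nmodType) n (Psi : tree -> V) :
  \sum_(t <- Y n.+1) Psi t =
  \sum_(i < n.+1) \sum_(a <- Y i) \sum_(b <- Y (n - i)%N) Psi (Node a b).
Proof.
rewrite YE trees_decomp group; apply: eq_bigr => i _.
have Hi : (i <= n)%N by have := ltn_ord i; lia.
rewrite YE stab2 //; apply: eq_bigr => a _.
by rewrite YE stab2 // leq_subr.
Qed.

Lemma Y0 : Y 0 = [:: Leaf].
Proof. by []. Qed.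

Definition compF (c : seq nat) : seq (seq nat) :=
  match c with
  | k :: c' => [:: 1%N :: k :: c'; k.+1 :: c']
  | [::] => [::]
  end.

Lemma compsSS n : comps n.+2 = flatten [seq compF c | c <- comps n.+1].
Proof. by []. Qed.

Lemma comps_nonnil n : all (fun c => ~~ nilp c) (comps n.+1).
Proof.
case: n => [|n] //; rewrite compsSS.
elim: (comps n.+1) => [|c s IH] //=; rewrite all_cat IH andbT.
by case: c.
Qed.

Lemma comps_decomp (V : nmodType) n (Phi : seq nat -> V) :
  \sum_(c <- comps n.+1) Phi c =
  \sum_(i < n.+1) \sum_(c <- comps (n - i)%N) Phi (i.+1 :: c).
Proof.
elim: n Phi => [|n IH] Phi.
  by rewrite big_ord1 /= !big_seq1.
rewrite compsSS big_flatten /= big_map.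
transitivity (\sum_(c <- comps n.+1) (Phi (1%N :: c) +
   Phi (if c is k :: c' then k.+1 :: c' else [::]))).
  rewrite big_seq [RHS]big_seq; apply: eq_bigr => c cin.
  have := allP (comps_nonnil n) c cin.
  by case: c {cin} => [|k c] //= _; rewrite big_cons big_seq1.
rewrite big_split (IH (fun c => Phi (if c is k :: c' then k.+1 :: c' else [::]))).
rewrite [in RHS]big_ord_recl subn0; by congr (_ + _).
Qed.

Lemma ml0 (K : fieldType) (B : algType K) (G : seq B -> B) (hG : multilinear G) pre post :
  G (pre ++ 0 :: post) = 0.
Proof.
have := hG pre post 1 0 0; rewrite !scale1r addr0 => E.
by apply: (@GRing.addrI _ (G (pre ++ 0 :: post))); rewrite -E addr0.
Qed.

Lemma sumlin (K : fieldType) (B : algType K) (G : seq B -> B) (hG : multilinear G)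
  (I : Type) (r : seq I) (F : I -> B) pre post :
  \sum_(a <- r) G (pre ++ F a :: post) = G (pre ++ (\sum_(a <- r) F a) :: post).
Proof.
elim: r => [|a r IH]; first by rewrite !big_nil ml0.
by rewrite !big_cons IH -[F a in RHS]scale1r hG scale1r.
Qed.

Lemma claim (K : fieldType) (B : algType K) (G : seq B -> B) (hG : multilinear G)
  (term : tree -> seq B -> B) (T : tree -> seq B -> seq B) (h : seq B -> B)
  (TL : forall xs, T Leaf xs = [::])
  (TN : forall s t xs, ((tsize s).+1 <= size xs)%N ->
     T (Node s t) xs = term s (take (tsize s).+1 xs) :: T t (drop (tsize s).+1 xs))
  (hh : forall ys, (0 < size ys)%N -> h ys = \sum_(s <- Y (size ys).-1) term s ys) :
  forall n pre xs, size xs = n ->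
  \sum_(t <- Y n) G (pre ++ T t xs) = \sum_(c <- comps n) G (pre ++ map h (reshape c xs)).
Proof.
elim/ltn_ind => -[|n] IH pre xs sxs.
  by move/size0nil: sxs => ->; rewrite Y0 /= !big_seq1 TL.
rewrite Y_decomp comps_decomp; apply: eq_bigr => i _.
have Hi := ltn_ord i.
transitivity (\sum_(a <- Y i) \sum_(c <- comps (n - i)%N)
   G (rcons pre (term a (take i.+1 xs)) ++ map h (reshape c (drop i.+1 xs)))).
  rewrite !YE; apply: eq_bigr => a /eqP ha.
  rewrite -(IH (n - i)%N _ (rcons pre (term a (take i.+1 xs))) (drop i.+1 xs)).
  - apply: eq_bigr => b _; rewrite TN ha ?cat_rcons //; lia.
  - lia.
  - rewrite size_drop sxs; lia.
rewrite exchange_big; apply: eq_bigr => c _ /=.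
under eq_bigr do rewrite cat_rcons.
rewrite sumlin // hh ?size_takel //; lia.
Qed.

Definition sp {K : fieldType} {B : algType K} (f g : seq B -> B) :=
  fix spine (r : tree) (ys : seq B) {struct r} : seq B :=
    match r with
    | Leaf => [::]
    | Node l' r' =>
        (cup g f l' (take (tsize l') ys) * nth 0 ys (tsize l'))
          :: spine r' (drop (tsize l').+1 ys)
    end.

Lemma cup_sp (K : fieldType) (B : algType K) (f g : seq B -> B) l r xs :
  cup f g (Node l r) xs = g (sp f g (Node l r) xs).
Proof. reflexivity. Qed.

Lemma spN (K : fieldType) (B : algType K) (f g : seq B -> B) l r ys :
  sp f g (Node l r) ys =
  (cup g f l (take (tsize l) ys) * nth 0 ys (tsize l)) :: sp f g r (drop (tsize l).+1 ys).
Proof. reflexivity. Qed.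

Lemma tsize_Rt t : tsize (Rt t) = (tsize t).*2.
Proof. by elim: t => //= a IHa b IHb; rewrite IHa IHb; lia. Qed.


Lemma ilv1_cat (K : fieldType) (B : algType K) (xs : seq B) (ys : seq B) : ilv1 (xs ++ ys) = ilv1 xs ++ ilv1 ys.
Proof. by rewrite /ilv1 map_cat flatten_cat. Qed.
Lemma ilv2_cat (K : fieldType) (B : algType K) (xs : seq B) (ys : seq B) : ilv2 (xs ++ ys) = ilv2 xs ++ ilv2 ys.
Proof. by rewrite /ilv2 map_cat flatten_cat. Qed.
Lemma ilv2_rcons (K : fieldType) (B : algType K) (xs : seq B) : rcons (ilv2 xs) 1 = 1 :: ilv1 xs.
Proof. by elim: xs => //= x xs IH; rewrite IH. Qed.
Lemma size_ilv2 (K : fieldType) (B : algType K) (xs : seq B) : size (ilv2 xs) = (size xs).*2.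
Proof. by elim: xs => //= x xs ->. Qed.

Lemma ilv1_cons (K : fieldType) (B : algType K) (x : B) xs : ilv1 (x :: xs) = x :: 1 :: ilv1 xs.
Proof. by []. Qed.
Lemma ilv2_cons (K : fieldType) (B : algType K) (x : B) xs : ilv2 (x :: xs) = 1 :: x :: ilv2 xs.
Proof. by []. Qed.

Lemma TN1 (K : fieldType) (B : algType K) (f g : seq B -> B) s t xs :
  ((tsize s).+1 <= size xs)%N ->
  sp f g (Rt (Node s t)) (ilv1 xs) =
  cup g f (Node Leaf (Rt s)) (behead (ilv2 (take (tsize s).+1 xs)))
    :: sp f g (Rt t) (ilv1 (drop (tsize s).+1 xs)).
Proof.
move=> H.
have sys : size (take (tsize s).+1 xs) = (tsize s).+1 := size_takel H.
have E : ilv1 xs = behead (ilv2 (take (tsize s).+1 xs)) ++ 1 :: ilv1 (drop (tsize s).+1 xs).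
  rewrite -{1}(cat_take_drop (tsize s).+1 xs) ilv1_cat.
  case: (take _ xs) sys => // y ys' _.
  by rewrite ilv1_cons ilv2_cons /= -cat_rcons ilv2_rcons.
have Hb : size (behead (ilv2 (take (tsize s).+1 xs))) = tsize (Node Leaf (Rt s)).
  rewrite size_behead size_ilv2 sys /= tsize_Rt; lia.
change (Rt (Node s t)) with (Node (Node Leaf (Rt s)) (Rt t)).
rewrite spN E take_size_cat // nth_cat Hb ltnn subnn nth0 [head _ _]/=.
congr (_ :: _); first exact: mulr1.
by rewrite -cat_rcons drop_size_cat // size_rcons Hb.
Qed.

Definition term2 {K : fieldType} {B : algType K} (f g : seq B -> B) s (ys : seq B) :=
  cup f g (Node Leaf (Rt s)) (rcons (ilv2 (take (tsize s) ys)) 1) * nth 0 ys (tsize s).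

Lemma TN2 (K : fieldType) (B : algType K) (f g : seq B -> B) s t xs :
  ((tsize s).+1 <= size xs)%N ->
  sp g f (Rt (Node s t)) (ilv2 xs) =
  term2 f g s (take (tsize s).+1 xs) :: sp g f (Rt t) (ilv2 (drop (tsize s).+1 xs)).
Proof.
move=> H.
rewrite /term2 take_takel // nth_take //.
have E : ilv2 xs = rcons (ilv2 (take (tsize s) xs)) 1 ++ nth 0 xs (tsize s) :: ilv2 (drop (tsize s).+1 xs).
  by rewrite -{1}(cat_take_drop (tsize s) xs) (drop_nth 0) // ilv2_cat ilv2_cons cat_rcons.
have Hb : size (rcons (ilv2 (take (tsize s) xs)) 1) = tsize (Node Leaf (Rt s)).
  rewrite size_rcons size_ilv2 size_takel /= ?tsize_Rt //; lia.
change (Rt (Node s t)) with (Node (Node Leaf (Rt s)) (Rt t)).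
rewrite spN E take_size_cat // nth_cat Hb ltnn subnn nth0 [head _ _]/=.
by rewrite -cat_rcons drop_size_cat // size_rcons Hb.
Qed.

Lemma hh1 (K : fieldType) (B : algType K) (f g : seq B -> B) (ys : seq B) :
  (0 < size ys)%N ->
  box1 f g ys = \sum_(s <- Y (size ys).-1) cup g f (Node Leaf (Rt s)) (behead (ilv2 ys)).
Proof. by case: ys. Qed.

Lemma mI0 (K : fieldType) (B : algType K) (zs : seq B) : (2 <= size zs)%N -> mI zs = 0.
Proof. by case: zs => [|a [|b l]]. Qed.

Lemma hh2 (K : fieldType) (B : algType K) (f g : seq B -> B) (ys : seq B) :
  (0 < size ys)%N ->
  mprod (box2 f g) (@mI K B) ys = \sum_(s <- Y (size ys).-1) term2 f g s ys.
Proof.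
move=> H; rewrite /mprod.
have [m sm] : exists m, size ys = m.+1 by exists (size ys).-1; lia.
rewrite sm /= big_ord_recr /= drop_oversize ?sm // mulr0 addr0.
rewrite big_ord_recr /= big1 ?add0r => [|i _]; last first.
  rewrite mI0 ?mulr0 // size_drop sm; have := ltn_ord i; lia.
rewrite (drop_nth 0) ?sm // drop_oversize ?sm //=.
case: m sm => [|m] sm.
  by rewrite Y0 big_seq1 /term2 /= take0 mul1r.
have -> : box2 f g (take m.+1 ys) =
   \sum_(s <- Y m.+1) cup f g (Node Leaf (Rt s)) (rcons (ilv2 (take m.+1 ys)) 1).
  have : size (take m.+1 ys) = m.+1 by rewrite size_takel ?sm.
  case: (take m.+1 ys) => [|a l] // <-; reflexivity.
rewrite mulr_suml !YE; apply: eq_bigr => s /eqP hs.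
by rewrite /term2 hs.
Qed.

Theorem lemma3 (K : fieldType) (charK0 : [pchar K] =i pred0)
  (B : algType K) (f g : seq B -> B)
  (hf : multilinear f) (hg : multilinear g) :
  (forall xs : seq B, boxt f g xs = mcomp g (box1 f g) xs) /\
  (forall xs : seq B, uboxt g f xs = mcomp f (mprod (box2 f g) (@mI K B)) xs).
Proof.
split => -[|x xs'].
- by rewrite /boxt /mcomp /= big_seq1.
- set xs := x :: xs'.
  have -> : boxt f g xs = \sum_(t <- Y (size xs)) g ([::] ++ sp f g (Rt t) (ilv1 xs)).
    rewrite /boxt /= !YE; apply: eq_bigr => -[|s t] //= /eqP //.
  rewrite (@claim _ _ g hg (fun s ys => cup g f (Node Leaf (Rt s)) (behead (ilv2 ys)))
     (fun t ys => sp f g (Rt t) (ilv1 ys)) (box1 f g)) //.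
  + by move=> s t ys H; rewrite TN1.
  + by move=> ys H; rewrite hh1.
- by rewrite /uboxt /mcomp /= big_seq1.
- set xs := x :: xs'.
  have -> : uboxt g f xs = \sum_(t <- Y (size xs)) f ([::] ++ sp g f (Rt t) (ilv2 xs)).
    rewrite /uboxt /= !YE; apply: eq_bigr => -[|s t] //= /eqP //.
  rewrite (@claim _ _ f hf (term2 f g)
     (fun t ys => sp g f (Rt t) (ilv2 ys)) (mprod (box2 f g) (@mI K B))) //.
  + by move=> s t ys H; rewrite TN2.
  + by move=> ys H; rewrite hh2.
Qed.
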